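(* Let $\Gamma=\langle x,y,z\mid xy^{-1}=yx^{-1},\ xz^{-1}=zx^{-1},\ yz^{-1}=zy^{-1}\rangle$ with generating set $\Delta=\{x,y,z\}$. There is no homogeneous scalar quantum walk on $C_\Delta(\Gamma)$.
   Context: The Cayley graph $C_\Delta(\Gamma)$ has vertex set $\Gamma$ and directed edges $(g,g\delta)$, $g\in\Gamma,\delta\in\Delta$. Let $\ell^2(\Gamma)$ have orthonormal basis $\{|g\rangle\}_{g\in\Gamma}$ and for $\delta\in\Gamma$ let $U_\delta|g\rangle=|g\delta\rangle$. A homogeneous scalar quantum walk on $C_\Delta(\Gamma)$ is a unitary operator $W=\sum_{\delta\in\Delta}W_\delta U_\delta$ with all complex coefficients $W_\delta$ nonzero. *)

(* Defs.v *)
From HB Require Import structures.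
From mathcomp Require Import all_boot all_order all_algebra.
From mathcomp Require Import complex.
From mathcomp Require Import classical_sets reals constructive_ereal esum.
Set Implicit Arguments. Unset Strict Implicit. Unset Printing Implicit Defensive.
Import Order.TTheory GRing.Theory Num.Theory.
Local Open Scope ring_scope.

Definition rels (H : groupType) (a b c : H) : Prop :=
  [/\ (a / b = b / a)%g, (a / c = c / a)%g & (b / c = c / b)%g].

(* group homomorphism (multiplicativity suffices for groups) *)
Definition group_hom (G H : groupType) (f : G -> H) : Prop :=
  forall a b : G, f (a * b)%g = (f a * f b)%g.

(* (G; x, y, z) is a presentation of <x,y,z | rels>: the relations hold and
   (universal property) for every group H and every triple satisfying the
   relations there is a unique group homomorphism G -> H sending x,y,z to it. *)
Definition presents (G : groupType) (x y z : G) : Prop :=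
  rels x y z /\
  forall (H : groupType) (a b c : H), rels a b c ->
    exists f : G -> H,
      [/\ group_hom f, f x = a, f y = b, f z = c &
          forall g : G -> H, group_hom g -> g x = a -> g y = b -> g z = c ->
            g =1 f].

Section L2.
Variables (R : realType) (G : groupType).

Definition csqnorm (c : R[i]) : R := (complex.Re c) ^+ 2 + (complex.Im c) ^+ 2.

Definition l2norm2 (f : G -> R[i]) : \bar R :=
  esum [set: G] (fun g => (csqnorm (f g))%:E).

Definition in_l2 (f : G -> R[i]) : Prop := (l2norm2 f < +oo)%E.

(* U_d |g> = |g d>, i.e. (U_d f)(h) = f (h d^-1).  The walk operator
   W = \sum_(d in D) w d U_d, acting on functions G -> C. *)
Definition walk_op (w : G -> R[i]) (D : seq G) (f : G -> R[i]) : G -> R[i] :=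
  fun h => \sum_(d <- D) w d * f (h * d^-1)%g.

Definition unitary_l2 (T : (G -> R[i]) -> (G -> R[i])) : Prop :=
  (forall f, in_l2 f -> in_l2 (T f) /\ l2norm2 (T f) = l2norm2 f) /\
  (forall g, in_l2 g -> exists f, in_l2 f /\ T f = g).

Definition hom_scalar_qwalk (D : seq G) (w : G -> R[i]) : Prop :=
  (forall d, d \in D -> w d != 0) /\ unitary_l2 (walk_op w D).

End L2.

(* Main.v *)
Require Import Defs.
From HB Require Import structures.
From mathcomp Require Import all_boot all_order all_algebra.
From mathcomp Require Import complex.
From mathcomp Require Import classical_sets reals constructive_ereal esum fsbigop cardinality.
From mathcomp Require Import ring lra.
Set Implicit Arguments. Unset Strict Implicit. Unset Printing Implicit Defensive.
Import Order.TTheory GRing.Theory Num.Theory.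
Local Open Scope ring_scope.

Section S.
Variables (R : realType) (G : groupType).

Lemma l2fin (f : G -> R[i]) (s : seq G) : uniq s ->
  (forall h, h \notin s -> f h = 0) ->
  l2norm2 f = (\sum_(p <- s) csqnorm (f p))%:E.
Proof.
move=> us f0; rewrite /l2norm2.
transitivity (esum [set` s] (fun g => (csqnorm (f g))%:E)).
  rewrite [RHS]esum_mkcond; apply: eq_esum => h _.
  case: ifP => // /negbT; rewrite mem_setE => hs.
  by rewrite f0 // /csqnorm /= expr0n /= addr0.
rewrite esum_fset; last first.
- by move=> i _; rewrite lee_fin /csqnorm addr_ge0 // sqr_ge0.
- exact: finite_seq.
by rewrite -fsbig_seq // -sumEFin.
Qed.

Lemma csqD (a b : R[i]) : csqnorm (a + b) = csqnorm a + csqnorm b + 2 * (complex.Re a * complex.Re b + complex.Im a * complex.Im b).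
Proof. by case: a => a1 a2; case: b => b1 b2; rewrite /csqnorm /=; ring. Qed.

Definition delta (p h : G) : R[i] := if h == p then 1 else 0.

Lemma pair_orth (w : G -> R[i]) (u v t : G) :
  (u / v = v / u)%g -> uniq [:: u; v; t; (u / v * t)%g] -> (1 != u / v)%g ->
  (forall f, in_l2 f -> l2norm2 (walk_op w [:: u; v; t] f) = l2norm2 f) ->
  complex.Re (w u) * complex.Re (w v) + complex.Im (w u) * complex.Im (w v) = 0.
Proof.
set g := (u / v)%g => uv us g1 iso.
have gu : (g * u = v)%g by rewrite uv mulgVK.
have gv : (g * v = u)%g by rewrite /g mulgVK.
move: (us); rewrite /= !inE !negb_or -!andbA andbT
  => /and5P[uv0 ut ug vt /andP[vg tg]].
have E0 : l2norm2 (walk_op w [:: u; v; t] (delta 1)) = l2norm2 (delta 1).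
  apply: iso; rewrite /in_l2 (l2fin (f := delta 1) (s := [:: 1%g])) // ?ltry //.
  by move=> h; rewrite inE /delta => /negbTE ->.
have E1 : l2norm2 (walk_op w [:: u; v; t] (fun h => delta 1 h + delta g h)) = l2norm2 (fun h => delta 1 h + delta g h).
  apply: iso; rewrite /in_l2 (l2fin (s := [:: 1%g; g])) ?ltry //= ?inE ?g1 //.
  by move=> h; rewrite !inE negb_or /delta => /andP[/negbTE -> /negbTE ->]; rewrite addr0.
have W0 : walk_op w [:: u; v; t] (delta 1) = fun h => w u * delta u h + w v * delta v h + w t * delta t h.
  by apply: boolp.funext => h; rewrite /walk_op !big_cons big_nil /delta !divg_eq1 addr0 !addrA.
have W1 : walk_op w [:: u; v; t] (fun h => delta 1 h + delta g h) =
    fun h => (w u + w v) * (delta u h + delta v h) + w t * (delta t h + delta (g * t)%g h).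
  apply: boolp.funext => h; rewrite /walk_op !big_cons big_nil /delta !divg_eq1 !divg_eq gu gv.
  ring.
have vu0 : v != u by rewrite eq_sym.
have tu : t != u by rewrite eq_sym.
have gu' : (g * t)%g != u by rewrite eq_sym.
have tv : t != v by rewrite eq_sym.
have gv' : (g * t)%g != v by rewrite eq_sym.
have gt : (g * t)%g != t by rewrite eq_sym.
have g1' : g != 1%g by rewrite eq_sym.
move: E0 E1; rewrite W0 W1.
rewrite (l2fin (f := delta 1) (s := [:: 1%g])) //; last by move=> h; rewrite inE /delta => /negbTE ->.
rewrite (l2fin (f := fun h => delta 1 h + delta g h) (s := [:: 1%g; g])); last first.
  by move=> h; rewrite !inE negb_or /delta => /andP[/negbTE -> /negbTE ->]; rewrite addr0.
  by rewrite /= inE g1.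
have us3 : uniq [:: u; v; t] by rewrite /= !inE !negb_or uv0 ut vt.
rewrite (l2fin us3); last first.
  by move=> h; rewrite !inE !negb_or /delta => /and3P[/negbTE -> /negbTE -> /negbTE ->]; rewrite !mulr0 !addr0.
rewrite (l2fin us); last first.
  by move=> h; rewrite !inE !negb_or /delta => /and4P[/negbTE -> /negbTE -> /negbTE -> /negbTE ->]; rewrite !addr0 !mulr0 !addr0.
rewrite !big_cons !big_nil /delta !eqxx !(negbTE uv0, negbTE ut, negbTE ug, negbTE vt, negbTE vg, negbTE tg, negbTE vu0, negbTE tu, negbTE gu', negbTE tv, negbTE gv', negbTE gt, negbTE g1, negbTE g1').
rewrite /csqnorm.
case: (w u) => a1 a2; case: (w v) => b1 b2; case: (w t) => c1 c2 /=.
move=> /eqP; rewrite eqe => /eqP E0 /eqP; rewrite eqe => /eqP E1.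
nra.
Qed.

Lemma sq0 (p q : R) : p ^+ 2 + q ^+ 2 = 0 -> p = 0 /\ q = 0.
Proof.
move=> /eqP; rewrite paddr_eq0 ?sqr_ge0 // !sqrf_eq0 => /andP[/eqP -> /eqP ->]; by [].
Qed.

Lemma three_orth (a b c : R[i]) : a != 0 -> b != 0 -> c != 0 ->
  complex.Re a * complex.Re b + complex.Im a * complex.Im b = 0 ->
  complex.Re a * complex.Re c + complex.Im a * complex.Im c = 0 ->
  complex.Re b * complex.Re c + complex.Im b * complex.Im c = 0 -> False.
Proof.
case: a => a1 a2; case: b => b1 b2; case: c => c1 c2 /= na nb nc h1 h2 h3.
set D := b1 * c2 - b2 * c1.
have E1 : a1 * D = c2 * (a1 * b1 + a2 * b2) - b2 * (a1 * c1 + a2 * c2) by rewrite /D; ring.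
have E2 : a2 * D = b1 * (a1 * c1 + a2 * c2) - c1 * (a1 * b1 + a2 * b2) by rewrite /D; ring.
rewrite h1 h2 !mulr0 subr0 in E1; rewrite h1 h2 !mulr0 subr0 in E2.
have D0 : D = 0.
  have [a10|a10] := eqVneq a1 0.
    have [a20|a20] := eqVneq a2 0.
      by move: na; rewrite a10 a20 eqxx.
    by move/eqP: E2; rewrite mulf_eq0 (negbTE a20) => /eqP.
  by move/eqP: E1; rewrite mulf_eq0 (negbTE a10) => /eqP.
have E3 : (b1 ^+ 2 + b2 ^+ 2) * (c1 ^+ 2 + c2 ^+ 2) = (b1 * c1 + b2 * c2) ^+ 2 + D ^+ 2 by rewrite /D; ring.
rewrite h3 D0 expr0n /= addr0 in E3.
move/eqP: E3; rewrite mulf_eq0 => /orP[/eqP/sq0[b10 b20]|/eqP/sq0[c10 c20]].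
  by move: nb; rewrite b10 b20 eqxx.
by move: nc; rewrite c10 c20 eqxx.
Qed.
End S.

Definition H3 := ('I_2 * 'I_2 * 'I_2)%type.
Definition e1 : H3 := (ord_max, 1%g, 1%g).
Definition e2 : H3 := (1%g, ord_max, 1%g).
Definition e3 : H3 := (1%g, 1%g, ord_max).

Theorem mainTheorem6 (R : realType) (G : groupType) (x y z : G) :
  presents x y z ->
  ~ (exists w : G -> R[i], hom_scalar_qwalk [:: x; y; z] w).
Proof.
move=> [[rxy rxz ryz] univ] [w [nz [iso _]]].
have [|phi [fM fx fy fz _]] := univ H3 e1 e2 e3; first by split; apply/eqP.
have f1 : phi 1%g = 1%g.
  by apply: (mulIg (phi 1%g)); rewrite -fM !mul1g.
have fV p : phi (p^-1)%g = ((phi p)^-1)%g.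
  by apply: (mulIg (phi p)); rewrite -fM !mulVg f1.
have neq p q : phi p != phi q -> p != q by move=> h; apply: contraNneq h => ->.
have iso3 : forall f, in_l2 f -> l2norm2 (walk_op w [:: x; y; z] f) = l2norm2 f.
  by move=> f /iso[].
have perm1 : walk_op w [:: x; z; y] = walk_op w [:: x; y; z].
  by apply: boolp.funext => f; apply: boolp.funext => h; rewrite /walk_op !big_cons big_nil; ring.
have perm2 : walk_op w [:: y; z; x] = walk_op w [:: x; y; z].
  by apply: boolp.funext => f; apply: boolp.funext => h; rewrite /walk_op !big_cons big_nil; ring.
have o1 := pair_orth rxy _ _ iso3.
have iso2 : forall f, in_l2 f -> l2norm2 (walk_op w [:: x; z; y] f) = l2norm2 f by rewrite perm1.
have o2 := pair_orth rxz _ _ iso2.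
have iso4 : forall f, in_l2 f -> l2norm2 (walk_op w [:: y; z; x] f) = l2norm2 f by rewrite perm2.
have o3 := pair_orth ryz _ _ iso4.
apply: (three_orth (a := w x) (b := w y) (c := w z)).
- by apply: nz; rewrite inE eqxx.
- by apply: nz; rewrite !inE eqxx orbT.
- by apply: nz; rewrite !inE eqxx !orbT.
- apply: o1; last by apply: neq; rewrite fM fV f1 fx fy.
  by apply: (@map_uniq _ _ phi); rewrite /= !fM fV fx fy fz.
- apply: o2; last by apply: neq; rewrite fM fV f1 fx fz.
  by apply: (@map_uniq _ _ phi); rewrite /= !fM fV fx fy fz.
- apply: o3; last by apply: neq; rewrite fM fV f1 fz fy.
  by apply: (@map_uniq _ _ phi); rewrite /= !fM fV fx fy fz.
Qed.
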